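(* Let $\alpha \in (0,1)$. Let $f:[0,1]\to\mathbb{R}_{\ge 0}$ be convex with $f(1-\alpha)=0$, and let $f':[0,1]\to\mathbb{R}$ be a subderivative of $f$ (i.e. $f'(p)\in\partial f(p)$ for every $p\in[0,1]$) satisfying $f'(1-\alpha)=0$. Define $$\ell(p,y) := -f(p)-(y-p)f'(p), \qquad p\in[0,1],\ y\in\{0,1\}.$$ Then $\ell$ is a proper score, and $$\ell\text{-ERT} = \mathbb{E}_X\big[f(p(X))\big].$$
   Context: Let $(X,Y)\sim\mathbb{P}_{X,Y}$ on $\mathcal{X}\times\mathcal{Y}$, and let $C_\alpha(\cdot)$ be a prediction set rule mapping each $x\in\mathcal{X}$ to a subset $C_\alpha(x)\subseteq\mathcal{Y}$ (measurable). Let $Z:=\mathbf{1}\{Y\in C_\alpha(X)\}\in\{0,1\}$ and define the conditional coverage $p(x):=\mathbb{P}(Z=1\mid X=x)=\mathbb{P}(Y\in C_\alpha(X)\mid X=x)$. A function $\ell:[0,1]\times\{0,1\}\to\mathbb{R}$ is a proper score if for all $p,q\in[0,1]$, $\mathbb{E}_{y\sim \mathrm{Bernoulli}(q)}[\ell(p,y)]\ge \mathbb{E}_{y\sim\mathrm{Bernoulli}(q)}[\ell(q,y)]$. For a (measurable) predictor $h:\mathcal{X}\to[0,1]$, its risk is $\mathcal{R}_\ell(h):=\mathbb{E}_{X,Z}[\ell(h(X),Z)]$; a constant $c\in[0,1]$ is viewed as the constant predictor. The excess risk of the target coverage is $\ell\text{-ERT}:=\mathcal{R}_\ell(1-\alpha)-\mathcal{R}_\ell(p)$.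 All expectations are assumed to be well-defined. *)

(* Defs.v *)
From mathcomp Require Import all_boot all_order all_algebra.
From mathcomp Require Import all_classical all_reals all_analysis.
Set Implicit Arguments. Unset Strict Implicit. Unset Printing Implicit Defensive.
Import Order.TTheory GRing.Theory Num.Theory.
Local Open Scope ring_scope.
Local Open Scope classical_set_scope.

Section Defs.
Context (R : realType).

Definition convex01 (f : R -> R) : Prop :=
  forall x y t : R, 0 <= x <= 1 -> 0 <= y <= 1 -> 0 <= t <= 1 ->
    f (t * x + (1 - t) * y) <= t * f x + (1 - t) * f y.

Definition subderivative01 (f g : R -> R) : Prop :=
  forall p q : R, 0 <= p <= 1 -> 0 <= q <= 1 -> f p + g p * (q - p) <= f q.

(* the score  l(p,y) = - f(p) - (y - p) f'(p), y in {0,1} encoded as a real *)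
Definition score_of (f g : R -> R) (p y : R) : R := - f p - (y - p) * g p.

Definition bern_exp (l : R -> R -> R) (p q : R) : R := q * l p 1 + (1 - q) * l p 0.

Definition proper_score (l : R -> R -> R) : Prop :=
  forall p q : R, 0 <= p <= 1 -> 0 <= q <= 1 -> bern_exp l q q <= bern_exp l p q.
End Defs.

Definition coverZ {R : realType} {Om Xt Yt : Type}
  (C : Xt -> set Yt) (X : Om -> Xt) (Y : Om -> Yt) (w : Om) : R :=
  if `[< C (X w) (Y w) >] then 1 else 0.

Definition risk {R : realType} {d : measure_display} {Om : measurableType d} {Xt : Type}
  (P : probability Om R) (l : R -> R -> R) (X : Om -> Xt) (Z : Om -> R)
  (h : Xt -> R) : \bar R :=
  (\int[P]_w (l (h (X w)) (Z w))%:E)%E.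

(* Main.v *)
Require Import Defs.
From mathcomp Require Import all_boot all_order all_algebra.
From mathcomp Require Import all_classical all_reals all_analysis.
From mathcomp Require Import measurable_realfun ring lra.
Import Order.TTheory GRing.Theory Num.Theory.
Local Open Scope ring_scope.
Local Open Scope classical_set_scope.
Import HBNNSimple.

Lemma simple_decomp (R : realType) d (Om : measurableType d) (P : {measure set Om -> \bar R})
  dX (Xt : measurableType dX) (X : Om -> Xt) (mX : measurable_fun setT X)
  (g : Om -> R) (mg : measurable_fun setT g) (g0 : forall w, 0 <= g w)
  (s : {nnsfun Xt >-> R}) :
  (\int[P]_w (g w * s (X w))%:E =
   \sum_(y \in range s) (y%:E * \int[P]_w (g w * \1_(s @^-1` [set y]) (X w))%:E))%E.
Proof.
have fr : finite_set (range s) by exact: fimfunP.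
transitivity (\int[P]_w (\sum_(y \in range s) (y * (g w * \1_(s @^-1` [set y]) (X w)))%:E))%E.
  apply: eq_integral => w _.
  rewrite fsumEFin //; congr EFin.
  rewrite fimfunE mulr_fsumr; apply: eq_fsbigr => y _.
  by rewrite mulrCA.
have mB y : measurable_fun setT (fun w => \1_(s @^-1` [set y]) (X w) : R).
  by apply: measurableT_comp => //; apply: measurable_indic.
rewrite ge0_integral_fsum //; last first.
- move=> y w _; rewrite lee_fin indicE.
  case: (boolP (X w \in _)) => [/set_mem /= <-|_]; last by rewrite !mulr0.
  by rewrite mulr1 mulr_ge0.
- move=> y; apply/measurable_EFinP; apply: measurable_funM => //.
  exact: measurable_funM.
apply: eq_fsbigr => y /set_mem [x _ <-].
under eq_integral do rewrite EFinM.
rewrite ge0_integralZl //.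
- apply/measurable_EFinP; exact: measurable_funM.
- by move=> w _; rewrite lee_fin mulr_ge0// indicE ler0n.
- by rewrite lee_fin.
Qed.

Lemma simple_tower (R : realType) d (Om : measurableType d) (P : {measure set Om -> \bar R})
  dX (Xt : measurableType dX) (X : Om -> Xt) (mX : measurable_fun setT X)
  (S : set Om) (mS : measurable S) (p : Xt -> R) (mp : measurable_fun setT p)
  (p0 : forall x, 0 <= p x)
  (hyp : forall A, measurable A ->
     P (X @^-1` A `&` S) = (\int[P]_(w in X @^-1` A) (p (X w))%:E)%E)
  (s : {nnsfun Xt >-> R}) :
  (\int[P]_w (\1_S w * s (X w))%:E = \int[P]_w (p (X w) * s (X w))%:E)%E.
Proof.
have mpX : measurable_fun setT (p \o X) by exact: measurableT_comp.
rewrite (@simple_decomp _ _ _ P _ _ X mX (fun w => \1_S w : R) _ _ s) //; last first.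
  by apply: measurable_indic.
rewrite (@simple_decomp _ _ _ P _ _ X mX (fun w => p (X w)) mpX) //.
apply: eq_fsbigr => y _; congr (_ * _)%E.
have mB : measurable (X @^-1` (s @^-1` [set y])).
  by rewrite -(setTI (X @^-1` _)); apply: mX => //.
transitivity (\int[P]_w (\1_(X @^-1` (s @^-1` [set y]) `&` S) w)%:E)%E.
  by apply: eq_integral => w _; rewrite indicI /= mulrC.
rewrite integral_indic //; last exact: measurableI.
rewrite setIT hyp //.
rewrite integral_mkcond; apply: eq_integral => w _.
rewrite patchE indicE (_ : (X w \in _) = (w \in X @^-1` (s @^-1` [set y]))) //.
by case: ifP => _; rewrite ?mulr1 ?mulr0.
Qed.

Lemma approx_lim (R : realType) d (Om : measurableType d) (P : {measure set Om -> \bar R})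
  dX (Xt : measurableType dX) (X : Om -> Xt) (mX : measurable_fun setT X)
  (g : Om -> R) (mg : measurable_fun setT g) (g0 : forall w, 0 <= g w)
  (phi : Xt -> R) (mphi : measurable_fun setT (EFin \o phi)) (phi0 : forall x, 0 <= phi x) :
  (\int[P]_w (g w * phi (X w))%:E =
   limn (fun n => \int[P]_w (g w * nnsfun_approx measurableT mphi n (X w))%:E))%E.
Proof.
set s := nnsfun_approx measurableT mphi.
rewrite -monotone_convergence //.
- apply: eq_integral => w _; apply/esym/cvg_lim => //.
  under eq_fun do rewrite EFinM.
  rewrite EFinM; apply: cvgeZl => //.
  by apply: cvg_nnsfun_approx => // x _; rewrite lee_fin.
- move=> n; apply/measurable_EFinP; apply: measurable_funM => //.
  exact: measurableT_comp.
- by move=> n w _; rewrite lee_fin mulr_ge0.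
- move=> w _ m n mn; rewrite lee_fin ler_wpM2l //.
  exact/lefP/nd_nnsfun_approx.
Qed.

Lemma tower_nonneg (R : realType) d (Om : measurableType d) (P : {measure set Om -> \bar R})
  dX (Xt : measurableType dX) (X : Om -> Xt) (mX : measurable_fun setT X)
  (S : set Om) (mS : measurable S) (p : Xt -> R) (mp : measurable_fun setT p)
  (p0 : forall x, 0 <= p x)
  (hyp : forall A, measurable A ->
     P (X @^-1` A `&` S) = (\int[P]_(w in X @^-1` A) (p (X w))%:E)%E)
  (phi : Xt -> R) (mphi : measurable_fun setT phi) (phi0 : forall x, 0 <= phi x) :
  (\int[P]_w (\1_S w * phi (X w))%:E = \int[P]_w (p (X w) * phi (X w))%:E)%E.
Proof.
have mphiE : measurable_fun setT (EFin \o phi) by exact/measurable_EFinP.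
rewrite (@approx_lim _ _ _ P _ _ X mX (fun w => \1_S w : R) _ _ phi mphiE) //; last first.
  by apply: measurable_indic.
rewrite (@approx_lim _ _ _ P _ _ X mX (fun w => p (X w)) _ _ phi mphiE) //; last first.
  exact: measurableT_comp.
congr (limn _); apply/funext => n.
exact: simple_tower.
Qed.

Lemma bdd_int (R : realType) d (Om : measurableType d) (P : probability Om R)
  (u : Om -> R) (M : R) :
  measurable_fun setT u -> (forall w, `|u w| <= M) -> P.-integrable setT (EFin \o u).
Proof.
move=> mu hb; apply: (@le_integrable _ _ _ P setT measurableT _ (EFin \o cst M)).
- exact/measurable_EFinP.
- move=> w _; rewrite /comp /cst.
  rewrite !abse_EFin lee_fin (le_trans (hb w)) //.
  exact: ler_norm.
- exact: finite_measure_integrable_cst.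
Qed.

Theorem proposition1
  (R : realType) (d dX dY : measure_display)
  (Om : measurableType d) (P : probability Om R)
  (Xt : measurableType dX) (Yt : measurableType dY)
  (X : Om -> Xt) (Y : Om -> Yt) (C : Xt -> set Yt)
  (p : Xt -> R) (alpha : R) (f f' : R -> R) :
  0 < alpha < 1 ->
  measurable_fun setT X -> measurable_fun setT Y ->
  measurable [set xy : Xt * Yt | C xy.1 xy.2] ->
  (* p is the conditional coverage P(Z = 1 | X = x) *)
  measurable_fun setT p ->
  (forall x, 0 <= p x <= 1) ->
  (forall A, measurable A ->
     P (X @^-1` A `&` [set w | C (X w) (Y w)]) =
     (\int[P]_(w in X @^-1` A) (p (X w))%:E)%E) ->
  (* hypotheses on f and f' *)
  (forall q, 0 <= q <= 1 -> 0 <= f q) ->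
  convex01 f ->
  f (1 - alpha) = 0 ->
  subderivative01 f f' ->
  f' (1 - alpha) = 0 ->
  (* expectations are well-defined *)
  P.-integrable setT
    (fun w => (score_of f f' (1 - alpha) (coverZ C X Y w))%:E) ->
  P.-integrable setT
    (fun w => (score_of f f' (p (X w)) (coverZ C X Y w))%:E) ->
  P.-integrable setT (fun w => (f (p (X w)))%:E) ->
  proper_score (score_of f f') /\
  (risk P (score_of f f') X (coverZ C X Y) (fun _ => (1 - alpha)%R)
   - risk P (score_of f f') X (coverZ C X Y) p)%E
  = (\int[P]_w (f (p (X w)))%:E)%E.
Proof.
move=> ha mX mY hC mp p01 hyp f0 cvx fc hsub f'c _ _ intF.
split.
  move=> a q ha01 hq01; rewrite /bern_exp /score_of.
  have := hsub a q ha01 hq01.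
  have -> : q * (- f q - (1 - q) * f' q) + (1 - q) * (- f q - (0 - q) * f' q) = - f q.
    by ring.
  have -> : q * (- f a - (1 - a) * f' a) + (1 - q) * (- f a - (0 - a) * f' a)
     = - f a - (q - a) * f' a by ring.
  lra.
set S := [set w | C (X w) (Y w)].
have mS : measurable S.
  have mXY := measurable_fun_pair mX mY.
  have H := mXY measurableT _ hC; rewrite setTI in H; exact H.
have hZ : forall w, coverZ C X Y w = \1_S w :> R.
  move=> w; rewrite /coverZ indicE; case: asboolP => h.
    by rewrite mem_set.
  by rewrite memNset.
have mono : forall a b, 0 <= a <= 1 -> 0 <= b <= 1 -> a <= b -> f' a <= f' b.
  move=> a b ha01 hb01 ab.
  have h1 := hsub a b ha01 hb01; have h2 := hsub b a hb01 ha01.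
  have : (f' a - f' b) * (b - a) <= 0 by lra.
  rewrite le_eqVlt in ab; case/orP: ab => [/eqP -> _|ab]; first by [].
  rewrite pmulr_lle0 ?subr_gt0 //; lra.
set k := fun x => f' (p x).
have kb : forall x, f' 0 <= k x <= f' 1.
  move=> x; have := p01 x => hx; rewrite /k; apply/andP; split; apply: mono => //;
  by (apply/andP; split; lra) || lra.
set h := fun t : R => f' (if t < 0 then 0 else if 1 < t then 1 else t).
have hnd : nondecreasing_fun h.
  move=> a b ab; rewrite /h.
  case: (ltP a 0) => ?; case: (ltP 1 a) => ?; case: (ltP b 0) => ?; case: (ltP 1 b) => ?;
  apply: mono; try (apply/andP; split); lra.
have mk : measurable_fun setT k.
  have -> : k = h \o p.
    apply/funext => x; rewrite /k /h /=; have := p01 x => /andP[x0 x1].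
    case: (ltP (p x) 0) => ?; first lra.
    case: (ltP 1 (p x)) => ?; first lra.
    by [].
  by apply: measurableT_comp => //; exact: nondecreasing_measurable.
have p0 : forall x, 0 <= p x by move=> x; have /andP[] := p01 x.
have p1 : forall x, p x <= 1 by move=> x; have /andP[] := p01 x.
have ind01 : forall w, 0 <= (\1_S w : R) <= 1.
  by move=> w; rewrite indicE; case: (_ \in _); rewrite ?ler01 ?lexx.
set phi := fun x => k x - f' 0.
have mphi : measurable_fun setT phi.
  by apply: measurable_funB => //; exact: measurable_cst.
have phib : forall x, 0 <= phi x <= f' 1 - f' 0.
  by move=> x; have := kb x; rewrite /phi => /andP[? ?]; apply/andP; split; lra.
have phi0 : forall x, 0 <= phi x by move=> x; have /andP[] := phib x.
have T1 := @tower_nonneg R d Om P dX Xt X mX S mS p mp p0 hyp phi mphi phi0.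
have T2 := @tower_nonneg R d Om P dX Xt X mX S mS p mp p0 hyp (fun=> 1)
  (measurable_cst _) (fun=> ler01).
have mZ : measurable_fun setT (fun w => \1_S w : R) by apply: measurable_indic.
have mpX : measurable_fun setT (fun w => p (X w)) by exact: measurableT_comp.
have mkX : measurable_fun setT (fun w => k (X w)) by exact: measurableT_comp.
have mphiX : measurable_fun setT (fun w => phi (X w)) by exact: measurableT_comp.
set M := f' 1 - f' 0.
have i1 : P.-integrable setT (EFin \o (fun w => \1_S w * phi (X w))).
  apply: (@bdd_int _ _ _ P _ M); first exact: measurable_funM.
  move=> w; have := ind01 w; have := phib (X w) => /andP[? ?] /andP[? ?].
  rewrite /M ger0_norm ?mulr_ge0 //; nra.
have i2 : P.-integrable setT (EFin \o (fun w => p (X w) * phi (X w))).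
  apply: (@bdd_int _ _ _ P _ M); first exact: measurable_funM.
  move=> w; have := p01 (X w); have := phib (X w) => /andP[? ?] /andP[? ?].
  rewrite /M ger0_norm ?mulr_ge0 //; nra.
have i3 : P.-integrable setT (EFin \o (fun w => \1_S w : R)).
  apply: (@bdd_int _ _ _ P _ 1) => // w.
  by have := ind01 w => /andP[? ?]; rewrite ger0_norm.
have i4 : P.-integrable setT (EFin \o (fun w => p (X w))).
  apply: (@bdd_int _ _ _ P _ 1) => // w.
  by rewrite ger0_norm.
set G := fun w => (\1_S w - p (X w)) * k (X w).
have iG : P.-integrable setT (EFin \o G).
  apply: (@bdd_int _ _ _ P _ (`|f' 0| + `|f' 1|)).
    by apply: measurable_funM => //; exact: measurable_funB.
  move=> w; rewrite /G normrM.
  have n0 := ler_norm (f' 0); have n0' := ler_norm (- f' 0); rewrite normrN in n0'.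
  have n1 := ler_norm (f' 1); have n1' := ler_norm (- f' 1); rewrite normrN in n1'.
  have := kb (X w) => /andP[? ?].
  have hk : `|k (X w)| <= `|f' 0| + `|f' 1| by rewrite ler_norml; apply/andP; split; lra.
  have hd : `|\1_S w - p (X w)| <= 1.
    have := ind01 w; have := p01 (X w) => /andP[? ?] /andP[? ?].
    by rewrite ler_norml; apply/andP; split; lra.
  rewrite -[leRHS]mul1r; apply: ler_pM => //.
have HG : (\int[P]_w (G w)%:E = 0)%E.
  transitivity (\int[P]_w (((EFin \o (fun w => (\1_S w * phi (X w) - p (X w) * phi (X w))%R)) \+
     (EFin \o (fun w => (f' 0 * (\1_S w - p (X w)))%R))) w))%E.
    apply: eq_integral => w _; rewrite /= -EFinD; congr EFin; rewrite /G /phi; ring.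
  have i5 : P.-integrable setT (EFin \o (fun w => (\1_S w - p (X w))%R)).
    apply: (@bdd_int _ _ _ P _ 1); first exact: measurable_funB.
    move=> w; have := ind01 w; have := p01 (X w) => /andP[? ?] /andP[? ?].
    by rewrite ler_norml; apply/andP; split; lra.
  rewrite integralD_EFin //; last first.
  - apply: (@bdd_int _ _ _ P _ (`|f' 0|)).
      by apply: measurable_funM => //; exact: measurable_funB.
    move=> w; rewrite normrM; have := ind01 w; have := p01 (X w) => /andP[? ?] /andP[? ?].
    have hd : `|\1_S w - p (X w)| <= 1 by rewrite ler_norml; apply/andP; split; lra.
    by rewrite -[leRHS]mulr1; apply: ler_pM.
  - apply: (@bdd_int _ _ _ P _ M); first by apply: measurable_funB; exact: measurable_funM.
    move=> w; have := ind01 w; have := phib (X w) => /andP[? ?] /andP[? ?].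
    have := p01 (X w) => /andP[? ?].
    rewrite /M ler_norml; apply/andP; split; nra.
  rewrite (eq_integral (fun w => (\1_S w * phi (X w))%:E - (p (X w) * phi (X w))%:E))%E; last first.
    by move=> w _; rewrite /= EFinB.
  rewrite integralB_EFin // T1 subee ?add0e; last exact: integrable_fin_num.
  rewrite (eq_integral (fun w => (f' 0)%:E * (EFin \o (fun w => (\1_S w - p (X w))%R)) w))%E; last first.
    by move=> w _; rewrite /= EFinM.
  rewrite integralZl //.
  rewrite (eq_integral (fun w => (\1_S w)%:E - (p (X w))%:E))%E; last first.
    by move=> w _; rewrite /= EFinB.
  rewrite integralB_EFin //.
  rewrite (eq_integral (fun w => (\1_S w * 1)%:E))%E; last by move=> w _; rewrite mulr1.
  rewrite T2 (eq_integral (fun w => (p (X w))%:E))%E; last by move=> w _; rewrite mulr1.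
  by rewrite subee ?mule0 //; exact: integrable_fin_num.
have R0 : risk P (score_of f f') X (coverZ C X Y) (fun _ => (1 - alpha)%R) = 0%E.
  rewrite /risk integral0_eq // => w _; rewrite /score_of fc f'c; congr EFin; ring.
rewrite R0 /risk.
rewrite (eq_integral (fun w => (-1)%:E * (((EFin \o (fun w => f (p (X w)))) \+ (EFin \o G)) w)))%E; last first.
  by move=> w _; rewrite /= -EFinD -EFinM /score_of hZ /G /k; congr EFin; ring.
rewrite integralZl //; last exact: integrableD.
rewrite integralD_EFin // HG adde0 mulN1e sub0e oppeK //.
Qed.
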